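(* Let $H,A$ be as in the context and let $\alpha\in A$ be a non-trivial element invariant under the adjoint coaction, i.e. $\alpha_{(1)}S\alpha_{(3)}\otimes\alpha_{(2)}=1\otimes\alpha$. Then each of the following subspaces of $\ker\epsilon\subset H$ is stable under the quantum double action $h\triangleright x=h_{(1)}xSh_{(2)}$, $a\triangleright x=\langle a,x_{(1)}\rangle x_{(2)}-\langle a,x\rangle1$: \[L_\alpha=\{x\in\ker\epsilon\mid x_{(1)}\langle x_{(2)},\alpha\rangle=x\,\epsilon(\alpha)\},\] \[\widetilde{L_\alpha}=\{x\in\ker\epsilon\mid \langle x,a\alpha\rangle=\langle x,a\rangle\epsilon(\alpha)\ \forall a\in\ker\epsilon\subset A\},\] \[L_{\alpha,1}=\{x\in\ker\epsilon\mid \langle x,a\alpha\rangle=\langle x,a\rangle(\epsilon(\alpha)+1)\ \forall a\in\ker\epsilon\subset A\}.\] Moreover $L_\alpha$ is the quantum tangent space (annihilator in $\ker\epsilon\subset H$) of the bicovariant calculus obtained by quotienting $\ker\epsilon\subset A$ by $\{a\alpha-a\epsilon(\alpha)\mid a\in A\}$ (inner type-I), and $L_{\alpha,1}$ is that of the calculus obtained by quotienting $\ker\epsilon\subset A$ by $(\ker\epsilon)\cdot(\alpha-(\epsilon(\alpha)+1))$ (inner type-II).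
   Context: $H,A$ are Hopf algebras over $\mathbb{C}$ with invertible antipodes, non-degenerately paired by a Hopf pairing $\langle\ ,\ \rangle$ ($\langle hg,a\rangle=\langle h,a_{(1)}\rangle\langle g,a_{(2)}\rangle$, $\langle h,ab\rangle=\langle h_{(1)},a\rangle\langle h_{(2)},b\rangle$); Sweedler notation. The quantum tangent space of a bicovariant calculus defined by a quotienting subspace $M\subseteq\ker\epsilon\subset A$ (stable under left multiplication and the coaction $v\mapsto v_{(1)}Sv_{(3)}\otimes v_{(2)}$) is $\{x\in\ker\epsilon\subset H\mid\langle x,m\rangle=0\ \forall m\in M\}$. *)

(* Defs.v *)
From HB Require Import structures.
From mathcomp Require Import all_boot all_order all_algebra.
From mathcomp Require Import complex.
From mathcomp Require Import Rstruct.
Set Implicit Arguments. Unset Strict Implicit. Unset Printing Implicit Defensive.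
Import Order.TTheory GRing.Theory Num.Theory.
Local Open Scope ring_scope.

Definition CC : fieldType := (Rdefinitions.R)[i].

Section HopfDefs.
Variable K : fieldType.

Definition bilinear_map (V W U : lmodType K) (f : V -> W -> U) : Prop :=
  (forall c v1 v2 w, f (c *: v1 + v2) w = c *: f v1 w + f v2 w) /\
  (forall c v w1 w2, f v (c *: w1 + w2) = c *: f v w1 + f v w2).

Definition trilinear_map (V W X U : lmodType K) (f : V -> W -> X -> U) : Prop :=
  (forall c v1 v2 w x, f (c *: v1 + v2) w x = c *: f v1 w x + f v2 w x) /\
  (forall c v w1 w2 x, f v (c *: w1 + w2) x = c *: f v w1 x + f v w2 x) /\
  (forall c v w x1 x2, f v w (c *: x1 + x2) = c *: f v w x1 + f v w x2).

(* A finite list s of pairs represents the tensor  sum_(p in s) p.1 (x) p.2.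
   Two such lists represent the same element of V (x) W iff every bilinear
   map (universal property of the tensor product) agrees on them. *)
Definition teq2 (V W : lmodType K) (s t : seq (V * W)) : Prop :=
  forall (U : lmodType K) (f : V -> W -> U), bilinear_map f ->
    \sum_(p <- s) f p.1 p.2 = \sum_(p <- t) f p.1 p.2.

Definition teq3 (V W X : lmodType K) (s t : seq (V * W * X)) : Prop :=
  forall (U : lmodType K) (f : V -> W -> X -> U), trilinear_map f ->
    \sum_(p <- s) f p.1.1 p.1.2 p.2 = \sum_(p <- t) f p.1.1 p.1.2 p.2.

(* Hopf algebra structure (D = coproduct as Sweedler list, e = counit,
   S = antipode), with invertible antipode. *)
Definition is_hopf (H : algType K) (D : H -> seq (H * H)) (e : H -> K)
    (S : H -> H) : Prop :=
  [/\
      (forall c x y, teq2 (D (c *: x + y))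
                          ([seq (c *: p.1, p.2) | p <- D x] ++ D y)),
      (forall x, teq3 [seq (q.1, q.2, p.2) | p <- D x, q <- D p.1]
                      [seq (p.1, q.1, q.2) | p <- D x, q <- D p.2]),
      (forall x y, teq2 (D (x * y))
                        [seq (p.1 * q.1, p.2 * q.2) | p <- D x, q <- D y])
        /\ teq2 (D 1) [:: (1, 1)],
      [/\ forall c x y, e (c *: x + y) = c * e x + e y,
          e 1 = 1, forall x y, e (x * y) = e x * e y,
          forall x, \sum_(p <- D x) e p.1 *: p.2 = x &
          forall x, \sum_(p <- D x) e p.2 *: p.1 = x] &
      [/\ forall c x y, S (c *: x + y) = c *: S x + S y,
          forall x, \sum_(p <- D x) S p.1 * p.2 = e x *: 1,
          forall x, \sum_(p <- D x) p.1 * S p.2 = e x *: 1 &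
          exists S' : H -> H, cancel S S' /\ cancel S' S]].

Definition is_hopf_pairing (H A : algType K)
    (DH : H -> seq (H * H)) (eH : H -> K)
    (DA : A -> seq (A * A)) (eA : A -> K) (pr : H -> A -> K) : Prop :=
  [/\ forall c h1 h2 a, pr (c *: h1 + h2) a = c * pr h1 a + pr h2 a,
      forall c h a1 a2, pr h (c *: a1 + a2) = c * pr h a1 + pr h a2,
      forall h g a, pr (h * g) a = \sum_(p <- DA a) pr h p.1 * pr g p.2,
      forall h a b, pr h (a * b) = \sum_(p <- DH h) pr p.1 a * pr p.2 b &
      (forall a, pr 1 a = eA a) /\ (forall h, pr h 1 = eH h)].

Definition pairing_nondegenerate (H A : algType K) (pr : H -> A -> K) : Prop :=
  (forall h, (forall a, pr h a = 0) -> h = 0) /\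
  (forall a, (forall h, pr h a = 0) -> a = 0).

(* Adjoint coaction v |-> v_(1) S v_(3) (x) v_(2), as a Sweedler list
   (using (Delta (x) id) Delta v = v_(1) (x) v_(2) (x) v_(3)). *)
Definition adcoact (A : algType K) (DA : A -> seq (A * A)) (SA : A -> A)
    (v : A) : seq (A * A) :=
  [seq (q.1 * SA p.2, q.2) | p <- DA v, q <- DA p.1].

(* Quotienting subspace M of ker eps in A defining a bicovariant calculus:
   a subspace of ker eps, stable under left multiplication and under the
   adjoint coaction (Ad(M) subset A (x) M). *)
Definition quotienting_subspace (A : algType K) (DA : A -> seq (A * A))
    (eA : A -> K) (SA : A -> A) (M : A -> Prop) : Prop :=
  [/\ forall m, M m -> eA m = 0,
      M 0,
      forall c m n, M m -> M n -> M (c *: m + n),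
      forall a m, M m -> M (a * m) &
      forall m, M m -> exists s : seq (A * A),
         (forall p, p \in s -> M p.2) /\ teq2 (adcoact DA SA m) s].

Definition quantum_tangent_space (H A : algType K) (eH : H -> K)
    (pr : H -> A -> K) (M : A -> Prop) (x : H) : Prop :=
  eH x = 0 /\ forall m, M m -> pr x m = 0.

Definition dactH (H : algType K) (DH : H -> seq (H * H)) (SH : H -> H)
    (h x : H) : H :=
  \sum_(p <- DH h) p.1 * x * SH p.2.

Definition dactA (H A : algType K) (DH : H -> seq (H * H))
    (pr : H -> A -> K) (a : A) (x : H) : H :=
  \sum_(p <- DH x) pr p.1 a *: p.2 - pr x a *: 1.

Definition double_stable (H A : algType K) (DH : H -> seq (H * H))
    (SH : H -> H) (pr : H -> A -> K) (P : H -> Prop) : Prop :=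
  (forall h x, P x -> P (dactH DH SH h x)) /\
  (forall a x, P x -> P (dactA DH pr a x)).

Definition L_alpha (H A : algType K) (DH : H -> seq (H * H)) (eH : H -> K)
    (eA : A -> K) (pr : H -> A -> K) (alpha : A) (x : H) : Prop :=
  eH x = 0 /\ \sum_(p <- DH x) pr p.2 alpha *: p.1 = eA alpha *: x.

Definition Lt_alpha (H A : algType K) (eH : H -> K)
    (eA : A -> K) (pr : H -> A -> K) (alpha : A) (x : H) : Prop :=
  eH x = 0 /\
  forall a, eA a = 0 -> pr x (a * alpha) = pr x a * eA alpha.

Definition L_alpha1 (H A : algType K) (eH : H -> K)
    (eA : A -> K) (pr : H -> A -> K) (alpha : A) (x : H) : Prop :=
  eH x = 0 /\
  forall a, eA a = 0 -> pr x (a * alpha) = pr x a * (eA alpha + 1).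

Definition M_typeI (A : algType K) (eA : A -> K) (alpha : A) (m : A) : Prop :=
  exists a : A, m = a * alpha - eA alpha *: a.

Definition M_typeII (A : algType K) (eA : A -> K) (alpha : A) (m : A) : Prop :=
  exists a : A, eA a = 0 /\ m = a * (alpha - (eA alpha + 1) *: 1).

End HopfDefs.

(* Main.v *)
Require Import Defs.
From HB Require Import structures.
From mathcomp Require Import all_boot all_order all_algebra.
From mathcomp Require Import ring.
Import GRing.Theory.
Local Open Scope ring_scope.

Module Aux.
Set Implicit Arguments. Unset Strict Implicit.


Section Lin.
Variable K : fieldType.

Definition lin (V W : lmodType K) (g : V -> W) :=
  forall c x y, g (c *: x + y) = c *: g x + g y.

Section LinFacts.
Variables (V W : lmodType K) (g : V -> W) (hg : lin g).
Lemma lin0 : g 0 = 0.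
Proof.
have := hg 1 0 0; rewrite addr0 scale1r scale1r => h.
by apply: (@addrI _ (g 0)); rewrite -h addr0.
Qed.
Lemma linZ c x : g (c *: x) = c *: g x.
Proof. by rewrite -[c *: x]addr0 hg lin0 addr0. Qed.
Lemma linD x y : g (x + y) = g x + g y.
Proof. by have := hg 1 x y; rewrite !scale1r. Qed.
Lemma linN x : g (- x) = - g x.
Proof. by rewrite -scaleN1r linZ scaleN1r. Qed.
Lemma linB x y : g (x - y) = g x - g y.
Proof. by rewrite linD linN. Qed.
Lemma lin_sum (I : Type) (r : seq I) (F : I -> V) :
  g (\sum_(i <- r) F i) = \sum_(i <- r) g (F i).
Proof. exact: (big_morph g linD lin0). Qed.
End LinFacts.

Lemma lin_sumF (V W : lmodType K) (I : Type) (r : seq I) (F : I -> V -> W) :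
  (forall i, lin (F i)) -> lin (fun x => \sum_(i <- r) F i x).
Proof.
move=> hF c x y; rewrite scaler_sumr -big_split /=.
by apply: eq_bigr => i _; rewrite hF.
Qed.

Lemma lin_comp (U V W : lmodType K) (g : V -> W) (h : U -> V) :
  lin g -> lin h -> lin (fun x => g (h x)).
Proof. by move=> hg hh c x y; rewrite hh hg. Qed.

Lemma lin_id (V : lmodType K) : lin (fun x : V => x).
Proof. by []. Qed.

Lemma lin_scal (V W : lmodType K) (g : V -> W) (k : K) :
  lin g -> lin (fun x => k *: g x).
Proof. by move=> hg c x y; rewrite hg scalerDr !scalerA mulrC. Qed.

Lemma lin_add (V W : lmodType K) (g h : V -> W) :
  lin g -> lin h -> lin (fun x => g x + h x).
Proof.
move=> hg hh c x y; rewrite hg hh scalerDr.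
by rewrite -!addrA; congr (_ + _); rewrite addrCA.
Qed.

Lemma lin_opp (V W : lmodType K) (g : V -> W) :
  lin g -> lin (fun x => - g x).
Proof. by move=> hg c x y; rewrite hg opprD scalerN. Qed.

Lemma lin_mull (A : lalgType K) (a : A) : lin (fun x : A => x * a).
Proof. by move=> c x y; rewrite mulrDl scalerAl. Qed.
Lemma lin_mulr (A : algType K) (a : A) : lin (fun x : A => a * x).
Proof. by move=> c x y; rewrite mulrDr scalerAr. Qed.

Lemma lin_smul (V : lmodType K) (g : V -> K^o) (k : K) :
  lin g -> lin (fun x => (g x : K) * k : K^o).
Proof.
move=> hg c x y; rewrite hg.
by change ((c * g x + g y) * k = c * (g x * k) + g y * k); rewrite mulrDl mulrA.
Qed.
Lemma lin_smulr (V : lmodType K) (g : V -> K^o) (k : K) :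
  lin g -> lin (fun x => k * (g x : K) : K^o).
Proof.
move=> hg c x y; rewrite hg.
by change (k * (c * g x + g y) = c * (k * g x) + k * g y); rewrite mulrDr mulrCA.
Qed.
Lemma lin_sscale (V W : lmodType K) (g : V -> K^o) (w : W) :
  lin g -> lin (fun x => (g x : K) *: w).
Proof.
move=> hg c x y; rewrite hg.
by change ((c * g x + g y) *: w = c *: (g x *: w) + g y *: w); rewrite scalerDl scalerA.
Qed.

Lemma bilP (V W U : lmodType K) (f : V -> W -> U) :
  (forall w, lin (fun v => f v w)) -> (forall v, lin (f v)) -> bilinear_map f.
Proof. by move=> h1 h2; split=> *; [apply: h1|apply: h2]. Qed.
Lemma bil_l (V W U : lmodType K) (f : V -> W -> U) w :
  bilinear_map f -> lin (fun v => f v w).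
Proof. by case=> h1 _ c x y; apply: h1. Qed.
Lemma bil_r (V W U : lmodType K) (f : V -> W -> U) v :
  bilinear_map f -> lin (f v).
Proof. by case=> _ h2 c x y; apply: h2. Qed.

Lemma triP (V W X U : lmodType K) (f : V -> W -> X -> U) :
  (forall w x, lin (fun v => f v w x)) -> (forall v x, lin (fun w => f v w x)) ->
  (forall v w, lin (f v w)) -> trilinear_map f.
Proof. by move=> h1 h2 h3; split; [|split]=> *; [apply: h1|apply: h2|apply: h3]. Qed.


Definition slin (V : lmodType K) (g : V -> K) :=
  forall c x y, g (c *: x + y) = c * g x + g y.

Section SLinFacts.
Variables (V : lmodType K) (g : V -> K) (hg : slin g).
Lemma slin0 : g 0 = 0.
Proof.
have := hg 1 0 0; rewrite addr0 scale1r mul1r => h.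
by apply: (@addrI _ (g 0)); rewrite -h addr0.
Qed.
Lemma slinZ c x : g (c *: x) = c * g x.
Proof. by rewrite -[c *: x]addr0 hg slin0 addr0. Qed.
Lemma slinD x y : g (x + y) = g x + g y.
Proof. by have := hg 1 x y; rewrite scale1r mul1r. Qed.
Lemma slinN x : g (- x) = - g x.
Proof. by rewrite -scaleN1r slinZ mulN1r. Qed.
Lemma slinB x y : g (x - y) = g x - g y.
Proof. by rewrite slinD slinN. Qed.
Lemma slin_sum (I : Type) (r : seq I) (F : I -> V) :
  g (\sum_(i <- r) F i) = \sum_(i <- r) g (F i).
Proof. exact: (big_morph g slinD slin0). Qed.
Lemma slin_lin : lin (g : V -> K^o).
Proof. exact: hg. Qed.
End SLinFacts.

Lemma lin_slin (V : lmodType K) (g : V -> K^o) : lin g -> slin (g : V -> K).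
Proof. by []. Qed.

End Lin.


Section Hopf.
Variable K : fieldType.
Variable A : algType K.
Variables (D : A -> seq (A * A)) (e : A -> K) (S : A -> A).
Hypothesis hA : is_hopf D e S.

Lemma lin_e : lin (e : A -> K^o).
Proof. by case: hA => _ _ _ [h _ _ _ _] _ c x y; apply: h. Qed.
Lemma e1 : e 1 = 1. Proof. by case: hA => _ _ _ [_ h _ _ _] _. Qed.
Lemma e_mul x y : e (x * y) = e x * e y. Proof. by case: hA => _ _ _ [_ _ h _ _] _. Qed.
Lemma counitl x : \sum_(p <- D x) e p.1 *: p.2 = x. Proof. by case: hA => _ _ _ [_ _ _ h _] _. Qed.
Lemma counitr x : \sum_(p <- D x) e p.2 *: p.1 = x. Proof. by case: hA => _ _ _ [_ _ _ _ h] _. Qed.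
Lemma lin_S : lin S. Proof. by case: hA => _ _ _ _ [h _ _ _]. Qed.
Lemma S_l x : \sum_(p <- D x) S p.1 * p.2 = e x *: 1. Proof. by case: hA => _ _ _ _ [_ h _ _]. Qed.
Lemma S_r x : \sum_(p <- D x) p.1 * S p.2 = e x *: 1. Proof. by case: hA => _ _ _ _ [_ _ h _]. Qed.
Lemma hS c x y : S (c *: x + y) = c *: S x + S y. Proof. exact: lin_S. Qed.

Lemma D_lin (U : lmodType K) (f : A -> A -> U) : bilinear_map f ->
  lin (fun x => \sum_(p <- D x) f p.1 p.2).
Proof.
move=> bf c x y; case: hA => hD _ _ _ _.
rewrite (hD c x y U f bf) big_cat big_map /= scaler_sumr; congr (_ + _).
by apply: eq_bigr => p _; rewrite (linZ (bil_l _ bf)).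
Qed.

Lemma D_mul (U : lmodType K) (f : A -> A -> U) x y : bilinear_map f ->
  \sum_(p <- D (x * y)) f p.1 p.2 =
  \sum_(p <- D x) \sum_(q <- D y) f (p.1 * q.1) (p.2 * q.2).
Proof.
move=> bf; case: hA => _ _ [hM _] _ _.
by rewrite (hM x y U f bf) big_allpairs_dep.
Qed.

Lemma D_one (U : lmodType K) (f : A -> A -> U) : bilinear_map f ->
  \sum_(p <- D 1) f p.1 p.2 = f 1 1.
Proof.
move=> bf; case: hA => _ _ [_ h1] _ _.
by rewrite (h1 U f bf) big_seq1.
Qed.

Lemma coas (U : lmodType K) (f : A -> A -> A -> U) x : trilinear_map f ->
  \sum_(p <- D x) \sum_(q <- D p.1) f q.1 q.2 p.2 =
  \sum_(p <- D x) \sum_(q <- D p.2) f p.1 q.1 q.2.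
Proof.
move=> tf; case: hA => _ hC _ _ _.
by have := hC x U f tf; rewrite !big_allpairs_dep.
Qed.

Ltac linsimp := repeat progress rewrite ?mulrDl ?mulrDr -?scalerAl -?scalerAr ?hS ?scalerDr ?scalerA.

Lemma S_anti a b : S (a * b) = S b * S a.
Proof.
have inner u v w y : \sum_(q' <- D y) u * (v * q'.1) * S q'.2 * w = e y *: (u * v * w).
  transitivity (u * v * (\sum_(q' <- D y) q'.1 * S q'.2) * w).
    by rewrite mulr_sumr mulr_suml; apply: eq_bigr => q' _; rewrite !mulrA.
  by rewrite S_r -scalerAr mulr1 -scalerAl.
have inner2 u y : \sum_(q' <- D y) u * q'.1 * S q'.2 = e y *: u.
  transitivity (u * (\sum_(q' <- D y) q'.1 * S q'.2)).
    by rewrite mulr_sumr; apply: eq_bigr => q' _; rewrite !mulrA.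
  by rewrite S_r -scalerAr mulr1.
pose X := \sum_(p <- D a) \sum_(p' <- D p.2) \sum_(q <- D b) \sum_(q' <- D q.2)
   S (p.1 * q.1) * (p'.1 * q'.1) * S q'.2 * S p'.2.
have X1 : X = S (a * b).
  have -> : a * b = \sum_(p <- D a) \sum_(q <- D b) (e p.2 * e q.2) *: (p.1 * q.1).
    rewrite -{1}[a]counitr -{1}[b]counitr mulr_suml; apply: eq_bigr => p _.
    rewrite mulr_sumr; apply: eq_bigr => q _.
    by rewrite -scalerAl -scalerAr scalerA.
  rewrite (lin_sum lin_S); apply: eq_bigr => p _.
  rewrite (lin_sum lin_S) exchange_big /=; apply: eq_bigr => q _.
  rewrite (linZ lin_S).
  under eq_bigr => i _ do rewrite inner.
  by rewrite -scaler_sumr inner2 scalerA mulrC.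
have tri1 : trilinear_map (fun u1 u2 u3 => \sum_(q <- D b) \sum_(q' <- D q.2)
     S (u1 * q.1) * (u2 * q'.1) * S q'.2 * S u3).
  by apply: triP => *; apply: lin_sumF => q; apply: lin_sumF => q' c x y; linsimp.
have tri2 u1 u2 u3 : trilinear_map (fun v1 v2 v3 => S (u1 * v1) * (u2 * v2) * S v3 * S u3).
  by apply: triP => * c x y; linsimp.
have inner3 u w y : \sum_(r <- D y) S r.1 * r.2 * u * w = e y *: (u * w).
  transitivity ((\sum_(r <- D y) S r.1 * r.2) * u * w).
    by rewrite !mulr_suml.
  by rewrite S_l -!scalerAl mul1r.
rewrite -X1 /X -(coas _ tri1) /=.
under eq_bigr => p _ do under eq_bigr => p' _ do rewrite -(coas _ (tri2 p'.1 p'.2 p.2)) /=.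
have bil3 u w : bilinear_map (fun x y : A => S x * y * u * w).
  by apply: bilP => * c x y; linsimp.
under eq_bigr => p _ do rewrite exchange_big /=.
under eq_bigr => p _ do under eq_bigr => q _ do
  rewrite -(D_mul _ _ (bil3 (S q.2) (S p.2))) inner3 e_mul.
transitivity ((\sum_(q <- D b) e q.1 *: S q.2) * (\sum_(p <- D a) e p.1 *: S p.2)); last first.
  congr (_ * _).
    rewrite -{2}(counitl b) (lin_sum lin_S); apply: eq_bigr => q _; by rewrite (linZ lin_S).
  rewrite -{2}(counitl a) (lin_sum lin_S); apply: eq_bigr => q _; by rewrite (linZ lin_S).
rewrite exchange_big mulr_suml; apply: eq_bigr => q _.
rewrite mulr_sumr; apply: eq_bigr => p _ /=.
by rewrite -scalerAl -scalerAr scalerA mulrC.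
Qed.



Lemma adcoact_sum (U : lmodType K) (f : A -> A -> U) x :
  \sum_(r <- adcoact D S x) f r.1 r.2 =
  \sum_(p <- D x) \sum_(q <- D p.1) f (q.1 * S p.2) q.2.
Proof. by rewrite /adcoact big_allpairs_dep. Qed.

Lemma bil_adF (U : lmodType K) (f : A -> A -> U) : bilinear_map f ->
  bilinear_map (fun u v => \sum_(q <- D u) f (q.1 * S v) q.2).
Proof.
move=> bf; apply: bilP => [v|u].
  apply: (D_lin (f := fun a b => f (a * S v) b)).
  apply: bilP => [w|a']; last exact: bil_r.
  exact: (lin_comp (bil_l _ bf) (lin_mull _)).
apply: lin_sumF => q.
exact: (lin_comp (bil_l _ bf) (lin_comp (lin_mulr _) lin_S)).
Qed.

Lemma lin_ad (U : lmodType K) (f : A -> A -> U) : bilinear_map f ->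
  lin (fun x => \sum_(r <- adcoact D S x) f r.1 r.2).
Proof.
move=> bf c x y; rewrite !adcoact_sum.
exact: (D_lin (bil_adF bf)).
Qed.

Lemma ad_mul (alpha : A) (hinv : teq2 (adcoact D S alpha) [:: (1, alpha)])
   (U : lmodType K) (f : A -> A -> U) b : bilinear_map f ->
  \sum_(r <- adcoact D S (b * alpha)) f r.1 r.2 =
  \sum_(p <- D b) \sum_(q <- D p.1) f (q.1 * S p.2) (q.2 * alpha).
Proof.
move=> bf; rewrite adcoact_sum (D_mul _ _ (bil_adF bf)).
apply: eq_bigr => p _.
have bg u v : bilinear_map (fun a c => f (a * S (u * v)) c).
  apply: bilP => [w|a']; last exact: bil_r.
  exact: (lin_comp (bil_l _ bf) (lin_mull _)).
under eq_bigr => p' _ do rewrite (D_mul _ _ (bg _ _)) S_anti.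
rewrite exchange_big /=; apply: eq_bigr => q _.
have bh : bilinear_map (fun u v => f (q.1 * u * S p.2) (q.2 * v)).
  apply: bilP => [w|u].
    exact: (lin_comp (bil_l _ bf) (lin_comp (lin_mull _) (lin_mulr _))).
  exact: (lin_comp (bil_r _ bf) (lin_mulr _)).
have := hinv U _ bh; rewrite big_seq1 /= mulr1 => <-.
rewrite (adcoact_sum (fun u v => f (q.1 * u * S p.2) (q.2 * v))); apply: eq_bigr => p' _; apply: eq_bigr => q' _.
by rewrite !mulrA.
Qed.


Lemma slin_e : slin e.
Proof. exact: lin_e. Qed.

Lemma adcoact_sumK (f : A -> A -> K) x :
  \sum_(r <- adcoact D S x) f r.1 r.2 =
  \sum_(p <- D x) \sum_(q <- D p.1) f (q.1 * S p.2) q.2.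
Proof. by rewrite /adcoact big_allpairs_dep. Qed.

Lemma D_linK (f : A -> A -> K) : bilinear_map (f : A -> A -> K^o) ->
  slin (fun x => \sum_(p <- D x) f p.1 p.2).
Proof. by move=> bf; apply: lin_slin; exact: (D_lin bf). Qed.

Lemma D_mulK (f : A -> A -> K) x y : bilinear_map (f : A -> A -> K^o) ->
  \sum_(p <- D (x * y)) f p.1 p.2 =
  \sum_(p <- D x) \sum_(q <- D y) f (p.1 * q.1) (p.2 * q.2).
Proof. move=> bf; exact: (D_mul x y bf). Qed.

Lemma coasK (f : A -> A -> A -> K) x : trilinear_map (f : A -> A -> A -> K^o) ->
  \sum_(p <- D x) \sum_(q <- D p.1) f q.1 q.2 p.2 =
  \sum_(p <- D x) \sum_(q <- D p.2) f p.1 q.1 q.2.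
Proof. move=> tf; exact: (coas x tf). Qed.

Lemma ad_mulK (alpha : A) (hinv : teq2 (adcoact D S alpha) [:: (1, alpha)])
   (f : A -> A -> K) b : bilinear_map (f : A -> A -> K^o) ->
  \sum_(r <- adcoact D S (b * alpha)) f r.1 r.2 =
  \sum_(p <- D b) \sum_(q <- D p.1) f (q.1 * S p.2) (q.2 * alpha).
Proof. move=> bf; exact: (ad_mul hinv b bf). Qed.


Variable alpha : A.
Hypothesis hinv : teq2 (adcoact D S alpha) [:: (1, alpha)].

Lemma ad_lin_split (U : lmodType K) (f : A -> A -> U) (a : A) (k : K) :
  bilinear_map f ->
  \sum_(r <- adcoact D S (a * alpha - k *: a)) f r.1 r.2 =
  \sum_(p <- D a) \sum_(q <- D p.1) (f (q.1 * S p.2) (q.2 * alpha) - k *: f (q.1 * S p.2) q.2).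
Proof.
move=> bf; rewrite (linB (lin_ad bf)) (linZ (lin_ad bf)) (ad_mul hinv _ bf) adcoact_sum.
rewrite scaler_sumr -sumrB; apply: eq_bigr => p _.
by rewrite scaler_sumr -sumrB.
Qed.

Lemma lin_gI : lin (fun a : A => a * alpha - e alpha *: a).
Proof. exact: (lin_add (lin_mull _) (lin_opp (lin_scal _ (@lin_id _ _)))). Qed.

Lemma qsI : quotienting_subspace D e S (M_typeI e alpha).
Proof.
split.
- move=> m [a ->]; rewrite (slinB slin_e) (slinZ slin_e) e_mul mulrC subrr //.
- by exists 0; rewrite mul0r scaler0 subr0.
- move=> c m n [a ->] [b ->]; exists (c *: a + b).
  by rewrite lin_gI.
- move=> b m [a ->]; exists (b * a).
  by rewrite mulrBr mulrA scalerAr.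
- move=> m [a ->].
  exists [seq (q.1 * S p.2, q.2 * alpha - e alpha *: q.2) | p <- D a, q <- D p.1].
  split.
    move=> r /allpairsPdep [p [q [_ _ ->]]] /=.
    by exists q.2.
  move=> U f bf; rewrite (ad_lin_split _ _ bf) big_allpairs_dep /=.
  apply: eq_bigr => p _; apply: eq_bigr => q _.
  by rewrite (linB (bil_r _ bf)) (linZ (bil_r _ bf)).
Qed.

Lemma helperII (a : A) (k : K) : a * (alpha - k *: 1) = a * alpha - k *: a.
Proof. by rewrite mulrBr -scalerAr mulr1. Qed.

Lemma qsII : quotienting_subspace D e S (M_typeII e alpha).
Proof.
set k := e alpha + 1.
split.
- by move=> m [a [ea ->]]; rewrite e_mul ea mul0r.
- by exists 0; rewrite mul0r (slin0 slin_e).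
- move=> c m n [a [ea ->]] [b [eb ->]]; exists (c *: a + b); split.
    by rewrite slin_e ea eb mulr0 addr0.
  by rewrite mulrDl -scalerAl.
- move=> b m [a [ea ->]]; exists (b * a); split.
    by rewrite e_mul ea mulr0.
  by rewrite mulrA.
- move=> m [a [ea ->]].
  exists [seq (q.1 * S p.2, (q.2 - e q.2 *: 1) * (alpha - k *: 1)) | p <- D a, q <- D p.1].
  split.
    move=> r /allpairsPdep [p [q [_ _ ->]]] /=.
    exists (q.2 - e q.2 *: 1); split => //.
    by rewrite (slinB slin_e) (slinZ slin_e) e1 mulr1 subrr.
  move=> U f bf; rewrite helperII (ad_lin_split _ _ bf) big_allpairs_dep /=.
  have Z : \sum_(p <- D a) \sum_(q <- D p.1) e q.2 *: f (q.1 * S p.2) (alpha - k *: 1) = 0.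
    transitivity (f (\sum_(p <- D a) p.1 * S p.2) (alpha - k *: 1)).
      rewrite (lin_sum (bil_l _ bf)); apply: eq_bigr => p _.
      rewrite -{2}(counitr p.1) mulr_suml (lin_sum (bil_l _ bf)); apply: eq_bigr => q _.
      by rewrite -scalerAl (linZ (bil_l _ bf)).
    by rewrite S_r ea scale0r (lin0 (bil_l _ bf)).
  transitivity (\sum_(p <- D a) \sum_(q <- D p.1) (f (q.1 * S p.2) (q.2 * alpha) -
       k *: f (q.1 * S p.2) q.2) -
     \sum_(p <- D a) \sum_(q <- D p.1) e q.2 *: f (q.1 * S p.2) (alpha - k *: 1)).
    by rewrite Z subr0.
  rewrite -sumrB; apply: eq_bigr => p _.
  rewrite -sumrB; apply: eq_bigr => q _.
  rewrite mulrBl -scalerAl mul1r helperII.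
  rewrite (linB (bil_r _ bf) _ (e q.2 *: _)) (linZ (bil_r _ bf) (e q.2)).
  by rewrite (linB (bil_r _ bf) (q.2 * alpha)) (linZ (bil_r _ bf) k).
Qed.

End Hopf.


Section Pair.
Variable K : fieldType.
Variables H A : algType K.
Variables (DH : H -> seq (H * H)) (eH : H -> K) (SH : H -> H).
Variables (DA : A -> seq (A * A)) (eA : A -> K) (SA : A -> A).
Hypotheses (hH : is_hopf DH eH SH) (hA : is_hopf DA eA SA).
Variable pr : H -> A -> K.
Hypothesis hp : is_hopf_pairing DH eH DA eA pr.

Lemma prDl c h1 h2 a : pr (c *: h1 + h2) a = c * pr h1 a + pr h2 a.
Proof. by case: hp. Qed.
Lemma prDr c h a1 a2 : pr h (c *: a1 + a2) = c * pr h a1 + pr h a2.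
Proof. by case: hp. Qed.
Lemma slin_prl a : slin (fun h => pr h a). Proof. by move=> *; apply: prDl. Qed.
Lemma slin_prr h : slin (pr h). Proof. by move=> *; apply: prDr. Qed.
Lemma pr_mulH h g a : pr (h * g) a = \sum_(p <- DA a) pr h p.1 * pr g p.2.
Proof. by case: hp. Qed.
Lemma pr_mulA h a b : pr h (a * b) = \sum_(p <- DH h) pr p.1 a * pr p.2 b.
Proof. by case: hp. Qed.
Lemma pr1l a : pr 1 a = eA a. Proof. by case: hp => _ _ _ _ []. Qed.
Lemma pr1r h : pr h 1 = eH h. Proof. by case: hp => _ _ _ _ []. Qed.

Lemma hSH c x y : SH (c *: x + y) = c *: SH x + SH y. Proof. exact: (hS hH c x y). Qed.
Lemma hSA c x y : SA (c *: x + y) = c *: SA x + SA y. Proof. exact: (hS hA c x y). Qed.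

Ltac slv := apply: slin_lin; move=> ? ? ? /=; rewrite ?hSH ?hSA ?prDl ?prDr; ring.

Lemma pr_S h a : pr (SH h) a = pr h (SA a).
Proof.
have F2 h' a' : \sum_(p <- DH h') \sum_(q <- DA a') pr p.1 q.1 * pr p.2 (SA q.2)
                = eH h' * eA a'.
  transitivity (pr h' (\sum_(q <- DA a') q.1 * SA q.2)).
    rewrite (slin_sum (slin_prr h')) exchange_big; apply: eq_bigr => q _.
    by rewrite pr_mulA.
  by rewrite (S_r hA) (slinZ (slin_prr h')) pr1r mulrC.
transitivity (\sum_(p <- DH h) \sum_(q <- DA a) pr (SH p.1) q.1 * (eH p.2 * eA q.2)).
  rewrite -{1}(counitr hH h) (lin_sum (lin_S hH)) (slin_sum (slin_prl a)).
  apply: eq_bigr => p _.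
  rewrite (linZ (lin_S hH)) (slinZ (slin_prl a)) -{1}(counitr hA a).
  rewrite (slin_sum (slin_prr _)) mulr_sumr; apply: eq_bigr => q _.
  by rewrite (slinZ (slin_prr _)); ring.
under eq_bigr => p _ do under eq_bigr => q _ do rewrite -F2 mulr_sumr.
under eq_bigr => p _ do rewrite exchange_big.
under eq_bigr => p _ do under eq_bigr => i _ do under eq_bigr => q _ do rewrite mulr_sumr.
have tri1 : trilinear_map (fun u1 u2 u3 => \sum_(q <- DA a) \sum_(q0 <- DA q.2)
     pr (SH u1) q.1 * (pr u2 q0.1 * pr u3 (SA q0.2)) : K^o).
  by apply: triP => *; apply: lin_sumF => q; apply: lin_sumF => q0; slv.
have := coasK hH h tri1; rewrite /= => <-.
have tri2 u1 u2 u3 : trilinear_map (fun v1 v2 v3 =>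
     pr (SH u1) v1 * (pr u2 v2 * pr u3 (SA v3)) : K^o).
  by apply: triP => *; slv.
under eq_bigr => p _ do under eq_bigr => i _ do rewrite -(coasK hA _ (tri2 i.1 i.2 p.2)) /=.
have F1 x y W : \sum_(i <- DH x) \sum_(q <- DA y) pr (SH i.1) q.1 * (pr i.2 q.2 * W)
   = eH x * eA y * W.
  transitivity (pr (\sum_(i <- DH x) SH i.1 * i.2) y * W).
    rewrite (slin_sum (slin_prl y)) mulr_suml; apply: eq_bigr => i _.
    by rewrite pr_mulH mulr_suml; apply: eq_bigr => q _; rewrite mulrA.
  by rewrite (S_l hH) (slinZ (slin_prl y)) pr1l.
under eq_bigr => p _ do rewrite exchange_big.
under eq_bigr => p _ do under eq_bigr => p0 _ do rewrite F1.
symmetry; rewrite -{1}(counitl hH h) (slin_sum (slin_prl _)); apply: eq_bigr => p _.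
rewrite (slinZ (slin_prl _)) -{1}(counitl hA a) (lin_sum (lin_S hA)) (slin_sum (slin_prr _)).
rewrite mulr_sumr; apply: eq_bigr => q _.
by rewrite (linZ (lin_S hA)) (slinZ (slin_prr _)); ring.
Qed.


Lemma pr_dactH h x c :
  pr (dactH DH SH h x) c = \sum_(r <- adcoact DA SA c) pr h r.1 * pr x r.2.
Proof.
rewrite /dactH (slin_sum (slin_prl c)) (adcoact_sumK _ _ (fun u v => pr h u * pr x v)).
under eq_bigr => p _ do rewrite pr_mulH.
under eq_bigr => p _ do under eq_bigr => q _ do rewrite pr_mulH pr_S mulr_suml.
under [RHS]eq_bigr => q _ do under eq_bigr => q' _ do rewrite pr_mulA mulr_suml.
rewrite exchange_big; apply: eq_bigr => q _ /=.
rewrite exchange_big; apply: eq_bigr => q' _ /=.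
by apply: eq_bigr => p _; ring.
Qed.

Lemma eH_dactH h x : eH x = 0 -> eH (dactH DH SH h x) = 0.
Proof.
move=> ex; rewrite /dactH (slin_sum (slin_e hH)) big1 // => p _.
by rewrite !(e_mul hH) ex mulr0 mul0r.
Qed.

Lemma pr_dactA a x b : pr (dactA DH pr a x) b = pr x (a * b) - pr x a * eA b.
Proof.
rewrite /dactA (slinB (slin_prl b)) (slin_sum (slin_prl b)) (slinZ (slin_prl b)) pr1l.
by rewrite pr_mulA; congr (_ - _); apply: eq_bigr => p _; rewrite (slinZ (slin_prl b)).
Qed.

Lemma eH_dactA a x : eH (dactA DH pr a x) = 0.
Proof.
rewrite /dactA (slinB (slin_e hH)) (slin_sum (slin_e hH)) (slinZ (slin_e hH)) (e1 hH) mulr1.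
apply/eqP; rewrite subr_eq0; apply/eqP.
rewrite -{2}(counitr hH x) (slin_sum (slin_prl a)); apply: eq_bigr => p _.
by rewrite (slinZ (slin_e hH)) (slinZ (slin_prl a)) mulrC.
Qed.

Variable alpha : A.
Hypothesis hinv : teq2 (adcoact DA SA alpha) [:: (1, alpha)].

Definition PL x := eH x = 0 /\ (forall b, pr x (b * alpha) = eA alpha * pr x b).
Definition Pk k x := eH x = 0 /\ (forall b, eA b = 0 -> pr x (b * alpha) = pr x b * k).

Lemma bil_pr h x : bilinear_map (fun u v => pr h u * pr x v : K^o).
Proof. by apply: bilP => * ; slv. Qed.

Lemma pr_dactH_mul h x b : pr (dactH DH SH h x) (b * alpha) =
  \sum_(p <- DA b) \sum_(q <- DA p.1) pr h (q.1 * SA p.2) * pr x (q.2 * alpha).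
Proof. by rewrite pr_dactH (ad_mulK hA hinv _ (bil_pr h x)). Qed.

Lemma pr_dactH' h x b : pr (dactH DH SH h x) b =
  \sum_(p <- DA b) \sum_(q <- DA p.1) pr h (q.1 * SA p.2) * pr x q.2.
Proof. by rewrite pr_dactH (adcoact_sumK _ _ (fun u v => pr h u * pr x v)). Qed.

Lemma stabH_L h x : PL x -> PL (dactH DH SH h x).
Proof.
case=> ex hx; split; first exact: eH_dactH.
move=> b; rewrite pr_dactH_mul pr_dactH' mulr_sumr; apply: eq_bigr => p _.
rewrite mulr_sumr; apply: eq_bigr => q _.
by rewrite hx; ring.
Qed.

Lemma stabA_L a x : PL x -> PL (dactA DH pr a x).
Proof.
case=> ex hx; split; first exact: eH_dactA.
move=> b; rewrite !pr_dactA mulrA hx (e_mul hA).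
by ring.
Qed.

Lemma stabH_k k h x : Pk k x -> Pk k (dactH DH SH h x).
Proof.
case=> ex hx; split; first exact: eH_dactH.
have key y : pr x (y * alpha) = pr x y * k + eA y * pr x alpha.
  have hy : eA (y - eA y *: 1) = 0.
    by rewrite (slinB (slin_e hA)) (slinZ (slin_e hA)) (e1 hA) mulr1 subrr.
  have := hx _ hy; rewrite (slinB (slin_prr x)) (slinZ (slin_prr x)) pr1r ex mulr0 subr0.
  rewrite mulrBl -scalerAl mul1r (slinB (slin_prr x)) (slinZ (slin_prr x)).
  by move=> h1; rewrite -h1; ring.
move=> b eb; rewrite pr_dactH_mul pr_dactH' mulr_suml.
under eq_bigr => p _ do under eq_bigr => q _ do rewrite key mulrDr.
under eq_bigr => p _ do rewrite big_split /=.
rewrite big_split /= -[RHS]addr0; congr (_ + _).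
  by apply: eq_bigr => p _; rewrite mulr_suml; apply: eq_bigr => q _; ring.
transitivity (pr h (\sum_(p <- DA b) p.1 * SA p.2) * pr x alpha).
  rewrite (slin_sum (slin_prr h)) mulr_suml; apply: eq_bigr => p _.
  rewrite -{2}(counitr hA p.1) mulr_suml (slin_sum (slin_prr h)) mulr_suml.
  apply: eq_bigr => q _.
  by rewrite -scalerAl (slinZ (slin_prr h)); ring.
by rewrite (S_r hA) eb scale0r (slin0 (slin_prr h)) mul0r.
Qed.

Lemma stabA_k k a x : Pk k x -> Pk k (dactA DH pr a x).
Proof.
case=> ex hx; split; first exact: eH_dactA.
move=> b eb; rewrite !pr_dactA mulrA hx; last by rewrite (e_mul hA) eb mulr0.
by rewrite (e_mul hA) eb; ring.
Qed.

Lemma L_alpha_PL (hnd1 : forall h, (forall a, pr h a = 0) -> h = 0) x :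
  L_alpha DH eH eA pr alpha x <-> PL x.
Proof.
split=> -[ex hx]; split=> //.
  move=> b; rewrite pr_mulA.
  transitivity (pr (\sum_(p <- DH x) pr p.2 alpha *: p.1) b).
    rewrite (slin_sum (slin_prl b)); apply: eq_bigr => p _.
    by rewrite (slinZ (slin_prl b)) mulrC.
  by rewrite hx (slinZ (slin_prl b)).
apply/eqP; rewrite -subr_eq0; apply/eqP; apply: hnd1 => b.
rewrite (slinB (slin_prl b)) (slin_sum (slin_prl b)) (slinZ (slin_prl b)) -hx pr_mulA.
apply/eqP; rewrite subr_eq0; apply/eqP; apply: eq_bigr => p _.
by rewrite (slinZ (slin_prl b)) mulrC.
Qed.

Lemma PL_qtsI x : PL x <-> quantum_tangent_space eH pr (M_typeI eA alpha) x.
Proof.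
split=> -[ex hx]; split=> //.
  by move=> m [a ->]; rewrite (slinB (slin_prr x)) (slinZ (slin_prr x)) hx subrr.
move=> b; have := hx _ (ex_intro _ b erefl).
rewrite (slinB (slin_prr x)) (slinZ (slin_prr x)) => /eqP; rewrite subr_eq0 => /eqP //.
Qed.

Lemma Pk_qtsII x : Pk (eA alpha + 1) x <-> quantum_tangent_space eH pr (M_typeII eA alpha) x.
Proof.
split=> -[ex hx]; split=> //.
  move=> m [a [ea ->]]; rewrite (helperII _ a).
  by rewrite (slinB (slin_prr x)) (slinZ (slin_prr x)) hx // mulrC subrr.
move=> b eb; have := hx _ (ex_intro _ b (conj eb erefl)).
rewrite (helperII _ b) (slinB (slin_prr x)) (slinZ (slin_prr x)) => /eqP.
by rewrite subr_eq0 mulrC => /eqP.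
Qed.

End Pair.

End Aux.

Theorem proposition2p5
  (H A : algType CC)
  (DH : H -> seq (H * H)) (eH : H -> CC) (SH : H -> H)
  (DA : A -> seq (A * A)) (eA : A -> CC) (SA : A -> A)
  (hopfH : is_hopf DH eH SH) (hopfA : is_hopf DA eA SA)
  (pr : H -> A -> CC)
  (hpair : is_hopf_pairing DH eH DA eA pr)
  (hnd : pairing_nondegenerate pr)
  (alpha : A)
  (alpha_nontriv : ~ (exists c : CC, alpha = c%:A))
  (alpha_inv : teq2 (adcoact DA SA alpha) [:: (1, alpha)]) :
  [/\ double_stable DH SH pr (L_alpha DH eH eA pr alpha),
      double_stable DH SH pr (Lt_alpha eH eA pr alpha),
      double_stable DH SH pr (L_alpha1 eH eA pr alpha),
      quotienting_subspace DA eA SA (M_typeI eA alpha)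
        /\ (forall x, L_alpha DH eH eA pr alpha x <->
                      quantum_tangent_space eH pr (M_typeI eA alpha) x) &
      quotienting_subspace DA eA SA (M_typeII eA alpha)
        /\ (forall x, L_alpha1 eH eA pr alpha x <->
                      quantum_tangent_space eH pr (M_typeII eA alpha) x)].

Proof.
have hnd1 := hnd.1.
split.
- split=> [h x|a x] hx.
    by apply/(Aux.L_alpha_PL hpair alpha hnd1); apply: (Aux.stabH_L hopfH hopfA hpair alpha_inv);
       apply/(Aux.L_alpha_PL hpair alpha hnd1).
  by apply/(Aux.L_alpha_PL hpair alpha hnd1); apply: (Aux.stabA_L hopfH hopfA hpair);
     apply/(Aux.L_alpha_PL hpair alpha hnd1).
- split=> [h x|a x] hx.
    exact: (Aux.stabH_k hopfH hopfA hpair alpha_inv).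
  exact: (Aux.stabA_k hopfH hopfA hpair).
- split=> [h x|a x] hx.
    exact: (Aux.stabH_k hopfH hopfA hpair alpha_inv).
  exact: (Aux.stabA_k hopfH hopfA hpair).
- split; first exact: (Aux.qsI hopfA alpha_inv).
  move=> x; rewrite (Aux.L_alpha_PL hpair alpha hnd1).
  exact: (Aux.PL_qtsI hpair alpha x).
- split; first exact: (Aux.qsII hopfA alpha_inv).
  move=> x; exact: (Aux.Pk_qtsII hpair alpha x).
Qed.
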